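(* For a commutative ring $R$ the following are equivalent: (i) every $R$-module has avoidance; (ii) every $R$-algebra is an avoidance ring; (iii) every ring extension of $R$ (every ring $S$ with an injective ring map $R\to S$) is an avoidance ring; (iv) every finitely generated $R$-module has avoidance.
   Context: All rings are commutative with $1\neq 0$. An $R$-module $M$ has avoidance if whenever $M=\bigcup_{k=1}^n M_k$ for finitely many $R$-submodules $M_k$, then $M=M_k$ for some $k$. An ideal $I$ of a ring has avoidance if whenever $I\subseteq\bigcup_{k=1}^n I_k$ for finitely many ideals $I_k$, then $I\subseteq I_k$ for some $k$; a ring is an avoidance ring if every ideal has avoidance. *)

(* Defs.v *)
From HB Require Import structures.
From mathcomp Require Import all_boot all_order all_algebra.
Set Implicit Arguments. Unset Strict Implicit. Unset Printing Implicit Defensive.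
Import GRing.Theory.
Local Open Scope ring_scope.

Definition is_submodule (R : comNzRingType) (M : lmodType R) (P : {pred M}) : Prop :=
  0 \in P /\ forall (a : R) (u v : M), u \in P -> v \in P -> a *: u + v \in P.

Definition module_avoidance (R : comNzRingType) (M : lmodType R) : Prop :=
  forall (n : nat) (P : 'I_n -> {pred M}),
    (forall k, is_submodule (P k)) ->
    (forall x : M, exists k, x \in P k) ->
    exists k, forall x : M, x \in P k.

Definition is_ideal (S : comNzRingType) (I : {pred S}) : Prop :=
  0 \in I /\ forall (a u v : S), u \in I -> v \in I -> a * u + v \in I.

Definition ideal_avoidance (S : comNzRingType) (I : {pred S}) : Prop :=
  forall (n : nat) (J : 'I_n -> {pred S}),
    (forall k, is_ideal (J k)) ->
    (forall x, x \in I -> exists k, x \in J k) ->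
    exists k, forall x, x \in I -> x \in J k.

Definition avoidance_ring (S : comNzRingType) : Prop :=
  forall I : {pred S}, is_ideal I -> ideal_avoidance I.

Definition fin_gen_module (R : comNzRingType) (M : lmodType R) : Prop :=
  exists (n : nat) (g : 'I_n -> M),
    forall x : M, exists c : 'I_n -> R, x = \sum_(i < n) c i *: g i.

(* Main.v *)
Require Import Defs.
From HB Require Import structures.
From mathcomp Require Import all_boot all_order all_algebra.
Set Implicit Arguments. Unset Strict Implicit. Unset Printing Implicit Defensive.
Import GRing.Theory.
Local Open Scope ring_scope.

Section Idz.
Variables (R : comNzRingType) (M : lmodType R).
Definition idz := (R * M)%type.
HB.instance Definition _ := GRing.Zmodule.on idz.
Definition idz_mul (x y : idz) : idz := (x.1 * y.1, x.1 *: y.2 + y.1 *: x.2).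
Definition idz_one : idz := (1, 0).
Lemma idz_mulA : associative idz_mul.
Proof.
case=> a u [b v] [c w]; rewrite /idz_mul /=; congr pair; first by rewrite mulrA.
rewrite !scalerDr !scalerA -!addrA [c * a]mulrC [c * b]mulrC; congr (_ + _).

Qed.
Lemma idz_mulC : commutative idz_mul.
Proof. by case=> a u [b v]; rewrite /idz_mul /= mulrC addrC. Qed.
Lemma idz_mul1 : left_id idz_one idz_mul.
Proof. by case=> a u; rewrite /idz_mul /= mul1r scale1r scaler0 addr0. Qed.
Lemma idz_mulDl : left_distributive idz_mul +%R.
Proof.
case=> a u [b v] [c w]; rewrite /idz_mul /=; congr pair; first by rewrite mulrDl.
rewrite scalerDl scalerDr /= -!addrA; congr (_ + _); rewrite !addrA; congr (_ + _); exact: addrC.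
Qed.
Lemma idz_one_neq0 : idz_one != 0.
Proof. by apply/negP=> /eqP [] /eqP; rewrite oner_eq0. Qed.
HB.instance Definition _ := GRing.Zmodule_isComNzRing.Build idz
  idz_mulA idz_mulC idz_mul1 idz_mulDl idz_one_neq0.
Definition idz_inl (r : R) : idz := (r, 0).
Lemma idz_inl_zmod : zmod_morphism idz_inl.
Proof. by move=> a b; rewrite /idz_inl; congr pair; rewrite subr0. Qed.
HB.instance Definition _ := GRing.isZmodMorphism.Build R idz idz_inl idz_inl_zmod.
Lemma idz_inl_mon : monoid_morphism idz_inl.
Proof.
split=> // a b; rewrite /idz_inl /=; congr pair.
by rewrite !scaler0 addr0.
Qed.
HB.instance Definition _ := GRing.isMonoidMorphism.Build R idz idz_inl idz_inl_mon.
End Idz.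
From Stdlib Require Import Classical.

Lemma neg_avoid (T : Type) n (P : 'I_n -> T -> Prop) :
  ~ (exists k, forall x, P k x) -> exists g : 'I_n -> T, forall k, ~ P k (g k).
Proof.
move=> Hno; apply: (@fin_all_exists _ (fun _ => T) (fun k x => ~ P k x)) => k; apply: NNPP => nx; apply: Hno.
exists k => x; apply: NNPP => hx; apply: nx; by exists x.
Qed.

Lemma delta_sum (R : comNzRingType) (V : zmodType) n (k : 'I_n) (F : R -> V -> V) (X : 'I_n -> V) :
  (forall v, F 0 v = 0) -> (forall v, F 1 v = v) ->
  \sum_(i < n) F ((delta_mx 0 k : 'rV[R]_n) 0 i) (X i) = X k.
Proof.
move=> F0 F1; rewrite (bigD1 k) //= mxE !eqxx /= F1 big1 ?addr0 // => i /negbTE ne.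
by rewrite mxE ne andbF F0.
Qed.

Lemma ideal_sum (S : comNzRingType) (I : {pred S}) n (a y : 'I_n -> S) :
  is_ideal I -> (forall i, y i \in I) -> \sum_(i < n) a i * y i \in I.
Proof.
move=> [I0 IC] Hy; apply: (big_ind (fun x => x \in I)) => //.
  by move=> u v Hu Hv; rewrite -(mul1r u); apply: IC.
by move=> i _; rewrite -(addr0 (a i * y i)); apply: IC.
Qed.

Lemma iii_to_i (R : comNzRingType) :
  (forall (S : comNzRingType) (f : {rmorphism R -> S}), injective f -> avoidance_ring S) ->
  forall M : lmodType R, module_avoidance M.
Proof.
move=> H M n P HP Hcov.
have inj : injective (@idz_inl R M) by move=> a b [].
have HI : is_ideal [pred x : idz M | x.1 == 0].
  split=> [|a u v]; rewrite !inE //= => /eqP u0 /eqP v0.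
  by rewrite u0 v0 mulr0 addr0.
have HJ : forall k, is_ideal [pred x : idz M | (x.1 == 0) && (x.2 \in P k)].
  move=> k; have [P0 PC] := HP k; split=> [|a u v]; rewrite !inE /= ?eqxx //.
  case/andP=> /eqP u0 Pu /andP[/eqP v0 Pv].
  rewrite u0 v0 mulr0 addr0 eqxx /= scale0r addr0.
  exact: PC.
have := H (idz M) (idz_inl M) inj _ HI n _ HJ.
case.
  move=> [r m]; rewrite inE /= => /eqP r0; have [k Hk] := Hcov m.
  by exists k; rewrite inE /= r0 eqxx.
move=> k Hk; exists k => m.
have := Hk (0, m); rewrite !inE /= eqxx => /(_ isT).
by case/andP.
Qed.

Lemma iv_to_i (R : comNzRingType) :
  (forall M : lmodType R, fin_gen_module M -> module_avoidance M) ->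
  forall M : lmodType R, module_avoidance M.
Proof.
move=> H M n P HP Hcov.
apply: NNPP => Hno. have [x Hx] := @neg_avoid _ _ (fun k x => x \in P k) Hno.
pose Q k := [pred c : 'rV[R]_n | \sum_(i < n) c 0 i *: x i \in P k].
have fg : fin_gen_module 'rV[R]_n.
  exists n, (fun j => delta_mx 0 j) => c; exists (fun j => c 0 j).
  exact: row_sum_delta.
have HQ : forall k, is_submodule (Q k).
  move=> k; have [P0 PC] := HP k; split=> [|a u v]; rewrite !inE.
    by rewrite big1 // => i _; rewrite mxE scale0r.
  move=> Hu Hv.
  have -> : \sum_(i < n) (a *: u + v) 0 i *: x i =
            a *: (\sum_(i < n) u 0 i *: x i) + \sum_(i < n) v 0 i *: x i.
    rewrite scaler_sumr -big_split /=; apply: eq_bigr => i _.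
    by rewrite !mxE scalerDl scalerA.
  exact: PC.
have Hc : forall c : 'rV[R]_n, exists k, c \in Q k.
  by move=> c; have [k Hk] := Hcov (\sum_(i < n) c 0 i *: x i); exists k.
have := H _ fg n Q HQ Hc; case=> k Hk.
apply: (Hx k); have := Hk (delta_mx 0 k); rewrite inE.
rewrite (@delta_sum R M n k (fun r v => r *: v) x) //.
  by move=> v; rewrite scale0r.
by move=> v; rewrite scale1r.
Qed.

Lemma i_to_ii (R : comNzRingType) :
  (forall M : lmodType R, module_avoidance M) ->
  forall (S : comNzRingType) (f : {rmorphism R -> S}), avoidance_ring S.
Proof.
move=> H S f I HI n J HJ Hcov.
apply: NNPP => Hno; have [y Hy] := @neg_avoid _ _ (fun k x => x \in I -> x \in J k) Hno.
have Hy1 : forall k, y k \in I.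
  by move=> k; apply: NNPP => nI; apply: (Hy k) => /nI.
have Hy2 : forall k, y k \notin J k.
  by move=> k; apply/negP => yJ; apply: (Hy k).
pose Q k := [pred c : 'rV[R]_n | \sum_(i < n) f (c 0 i) * y i \in J k].
have HQ : forall k, is_submodule (Q k).
  move=> k; have [J0 JC] := HJ k; split=> [|a u v]; rewrite !inE.
    by rewrite big1 // => i _; rewrite mxE rmorph0 mul0r.
  move=> Hu Hv.
  have -> : \sum_(i < n) f ((a *: u + v) 0 i) * y i =
            f a * (\sum_(i < n) f (u 0 i) * y i) + \sum_(i < n) f (v 0 i) * y i.
    rewrite mulr_sumr -big_split /=; apply: eq_bigr => i _.
    by rewrite !mxE rmorphD rmorphM mulrDl mulrA.
  exact: JC.
have Hc : forall c : 'rV[R]_n, exists k, c \in Q k.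
  move=> c; have [k Hk] := Hcov _ (ideal_sum (fun i => f (c 0 i)) HI Hy1).
  by exists k.
have := H _ n Q HQ Hc; case=> k Hk.
move: (Hy2 k); have := Hk (delta_mx 0 k); rewrite inE.
rewrite (@delta_sum R S n k (fun r v => f r * v) y) => [->//| v | v].
  by rewrite rmorph0 mul0r.
by rewrite rmorph1 mul1r.
Qed.

Theorem proposition3p21 (R : comNzRingType) :
  [<->
    (* (i) every R-module has avoidance *)
    (forall M : lmodType R, module_avoidance M);
    (* (ii) every R-algebra (commutative ring S with a ring map R -> S) is an avoidance ring *)
    (forall (S : comNzRingType) (f : {rmorphism R -> S}), avoidance_ring S);
    (* (iii) every ring extension of R is an avoidance ring *)
    (forall (S : comNzRingType) (f : {rmorphism R -> S}), injective f -> avoidance_ring S);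
    (* (iv) every finitely generated R-module has avoidance *)
    (forall M : lmodType R, fin_gen_module M -> module_avoidance M)].
Proof.
tfae.
- exact: i_to_ii.
- by move=> H S f _; apply: H f.
- by move=> H M _; apply: iii_to_i.
- exact: iv_to_i.
Qed.
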